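(* Fix probabilities $\{\pi_k\}_{k\ge1}$ with $\pi_k=\Pr(Q=k\mid Q\ge1)\ge0$. Then the function $$L(R)=\sum_{k=2}^{\infty}\pi_k\left[1-\frac{R^k-(R-1)^k}{k\,R^{k-1}}\right]$$ decreases monotonically with increasing number of RA preambles $R\ge1$.
   Context: $Q$ is the random number of user terminals transmitting an RA preamble in a frame, and $R$ is the number of allowed RA preambles; $L(R)$ is the collision-based lower bound on the timing error probability. *)

(* Defs.v *)
From Stdlib Require Import Reals.
From Coquelicot Require Import Coquelicot.
Open Scope R_scope.

Definition Lterm (R : nat) (k : nat) : Rdefinitions.R :=
  1 - ((INR R) ^ k - (INR R - 1) ^ k) / (INR k * (INR R) ^ (k - 1)).

Definition L (pi : nat -> Rdefinitions.R) (R : nat) : Rdefinitions.R :=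
  Series (fun n => pi (n + 2)%nat * Lterm R (n + 2)).

(* Main.v *)
Require Import Defs.
From Stdlib Require Import Reals Lra Lia.
From Coquelicot Require Import Coquelicot.
Open Scope R_scope.

Lemma Lterm_eq (R : nat) (n : nat) : (1 <= R)%nat ->
  Lterm R (n + 2) = 1 - sum_f_R0 (fun i => (1 - / INR R) ^ i) (S n) / INR (n + 2).
Proof.
  intros HR.
  assert (HRp : 0 < INR R) by (apply lt_0_INR; lia).
  assert (Hk : 0 < INR (n+2)) by (apply lt_0_INR; lia).
  unfold Lterm.
  replace (n + 2 - 1)%nat with (S n) by lia.
  replace (n + 2)%nat with (S (S n)) by lia.
  set (x := 1 - / INR R).
  assert (Hx : INR R - 1 = x * INR R) by (unfold x; field; lra).
  rewrite Hx, Rpow_mult_distr.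
  assert (HG := GP_finite x (S n)).
  assert (Hs : sum_f_R0 (fun i => x ^ i) (S n) = (1 - x ^ S (S n)) * INR R).
  { replace (S (S n)) with (S n + 1)%nat by lia.
    replace (1 - x ^ (S n + 1)) with (- (x ^ (S n + 1) - 1)) by ring.
    rewrite <- HG.
    assert (H1 : (x - 1) * (- INR R) = 1) by (unfold x; field; lra).
    transitivity (sum_f_R0 (fun i => x ^ i) (S n) * ((x - 1) * (- INR R))).
    { rewrite H1. ring. }
    ring. }
  rewrite Hs.
  assert (0 < INR R ^ S n) by (apply pow_lt; lra).
  assert (0 < INR (S (S n))) by (apply lt_0_INR; lia).
  assert (0 < INR R ^ n) by (apply pow_lt; lra).
  simpl pow. field. repeat split; lra.
Qed.

Lemma sum_pow_mono x y m : 0 <= x <= y ->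
  sum_f_R0 (fun i => x ^ i) m <= sum_f_R0 (fun i => y ^ i) m.
Proof.
  intros H. apply sum_Rle. intros i _. apply pow_incr. lra.
Qed.

Lemma sum_pow_le x m : 0 <= x <= 1 ->
  sum_f_R0 (fun i => x ^ i) m <= INR (S m).
Proof.
  intros H. rewrite <- (Rmult_1_l (INR (S m))), <- sum_cte.
  apply sum_Rle. intros i _. rewrite <- (pow1 i). apply pow_incr. lra.
Qed.

Lemma x_bounds (R : nat) : (1 <= R)%nat -> 0 <= 1 - / INR R <= 1.
Proof.
  intros HR. assert (H1 : 1 <= INR R) by (apply (le_INR 1); lia).
  assert (0 < / INR R) by (apply Rinv_0_lt_compat; lra).
  assert (/ INR R <= 1) by (rewrite <- Rinv_1; apply Rinv_le_contravar; lra).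
  lra.
Qed.

Lemma x_mono (R1 R2 : nat) : (1 <= R1)%nat -> (R1 <= R2)%nat ->
  1 - / INR R1 <= 1 - / INR R2.
Proof.
  intros H1 H2. assert (1 <= INR R1) by (apply (le_INR 1); lia).
  assert (INR R1 <= INR R2) by (apply le_INR; lia).
  assert (/ INR R2 <= / INR R1) by (apply Rinv_le_contravar; lra).
  lra.
Qed.

Lemma Lterm_bounds (R1 R2 : nat) n : (1 <= R1)%nat -> (R1 <= R2)%nat ->
  0 <= Lterm R2 (n + 2) <= Lterm R1 (n + 2) /\ Lterm R1 (n + 2) <= 1.
Proof.
  intros H1 H2.
  rewrite !Lterm_eq by lia.
  assert (Hk : 0 < INR (n + 2)) by (apply lt_0_INR; lia).
  assert (HS : INR (S (S n)) = INR (n + 2)) by (f_equal; lia).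
  pose proof (x_bounds R1 H1) as B1.
  pose proof (x_bounds R2 ltac:(lia)) as B2.
  pose proof (x_mono R1 R2 H1 H2) as M.
  pose proof (sum_pow_mono (1 - / INR R1) (1 - / INR R2) (S n) ltac:(lra)) as SM.
  pose proof (sum_pow_le _ (S n) B2) as L2.
  assert (P1 : 0 <= sum_f_R0 (fun i => (1 - / INR R1) ^ i) (S n)).
  { apply cond_pos_sum. intros; apply pow_le; lra. }
  rewrite HS in L2.
  unfold Rdiv.
  assert (0 < / INR (n+2)) by (apply Rinv_0_lt_compat; lra).
  split; [split|].
  - assert (sum_f_R0 (fun i => (1 - / INR R2) ^ i) (S n) * / INR (n + 2) <= 1); [|lra].
    apply (Rmult_le_reg_r (INR (n+2))); [lra|].
    rewrite Rmult_assoc, Rinv_l by lra. lra.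
  - assert (sum_f_R0 (fun i => (1 - / INR R1) ^ i) (S n) * / INR (n + 2) <=
            sum_f_R0 (fun i => (1 - / INR R2) ^ i) (S n) * / INR (n + 2)); [|lra].
    apply Rmult_le_compat_r; lra.
  - assert (0 <= sum_f_R0 (fun i => (1 - / INR R1) ^ i) (S n) * / INR (n + 2)); [|lra].
    apply Rmult_le_pos; lra.
Qed.

Theorem corollary1 (pi : nat -> R)
  (hpi_nonneg : forall k : nat, (1 <= k)%nat -> 0 <= pi k)
  (hpi_sum : is_series (fun n => pi (S n)) 1) :
  forall R1 R2 : nat, (1 <= R1)%nat -> (R1 <= R2)%nat -> L pi R2 <= L pi R1.
Proof.
  intros R1 R2 H1 H2. unfold L.
  assert (Ex : ex_series (fun n => pi (n + 2)%nat)).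
  { assert (E : ex_series (fun n => pi (S n))) by (exists 1; exact hpi_sum).
    apply (ex_series_incr_1 (fun n => pi (S n))) in E.
    eapply ex_series_ext; [|exact E]. intros n; simpl. f_equal; lia. }
  apply Series_le.
  - intros n. destruct (Lterm_bounds R1 R2 n H1 H2) as [[A B] C].
    assert (0 <= pi (n + 2)%nat) by (apply hpi_nonneg; lia).
    split; [apply Rmult_le_pos; lra| apply Rmult_le_compat_l; lra].
  - apply (@ex_series_le R_AbsRing R_CompleteNormedModule _ (fun n => pi (n + 2)%nat)); [|exact Ex].
    intros n. destruct (Lterm_bounds R1 R2 n H1 H2) as [[A B] C].
    assert (0 <= pi (n + 2)%nat) by (apply hpi_nonneg; lia).
    change (Rabs (pi (n + 2)%nat * Lterm R1 (n + 2)) <= pi (n + 2)%nat).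
    rewrite Rabs_pos_eq by (apply Rmult_le_pos; lra).
    rewrite <- (Rmult_1_r (pi (n+2)%nat)) at 2. apply Rmult_le_compat_l; lra.
Qed.
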